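(* Consider the system $$\frac{dx_1}{dt}=x_1\Big[r_1\Big(1-\frac{x_1}{K_1}\Big)-\frac{a x_2}{1+h a x_1}\Big],\qquad \frac{dx_2}{dt}=x_2\Big[\frac{e a x_1}{1+h a x_1}-d+r_2\Big(1-\frac{x_2}{K_2}\Big)\Big]$$ on $X=\mathbb R^2_+$, with constants $r_1,r_2,K_1,K_2,a,h,e>0$ and $d\ge0$. Then: (i) the host $x_1$ is persistent in $X$ if $d>r_2$ or $\frac{r_1}{a}>K_2\big(1-\frac{d}{r_2}\big)>0$; (ii) the parasite $x_2$ is persistent in $X$ if $r_2+\frac{eaK_1}{1+ahK_1}>d$; (iii) the system is permanent in $X$ if either $r_2+\frac{eaK_1}{1+ahK_1}>d>r_2$ or $\frac{r_1}{a}>K_2\big(1-\frac{d}{r_2}\big)>0$.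
   Context: A species $x_i$ is persistent if there is $\varepsilon>0$ such that $\liminf_{t\to\infty}x_i(t)\ge\varepsilon$ for every solution with $x_1(0)>0$ and $x_2(0)>0$; the system is permanent if both species are persistent. *)

(* Defs.v *)
From Stdlib Require Import Reals.
Open Scope R_scope.

Definition f1 (r1 K1 a h : R) (x1 x2 : R) : R :=
  x1 * (r1 * (1 - x1 / K1) - a * x2 / (1 + h * a * x1)).

Definition f2 (r2 K2 a h e d : R) (x1 x2 : R) : R :=
  x2 * (e * a * x1 / (1 + h * a * x1) - d + r2 * (1 - x2 / K2)).

Definition is_solution (r1 r2 K1 K2 a h e d : R) (x1 x2 : R -> R) : Prop :=
  (forall eps, 0 < eps -> exists delta, 0 < delta /\
     forall t, 0 <= t < delta ->
       Rabs (x1 t - x1 0) < eps /\ Rabs (x2 t - x2 0) < eps) /\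
  (forall t, 0 < t ->
     derivable_pt_lim x1 t (f1 r1 K1 a h (x1 t) (x2 t)) /\
     derivable_pt_lim x2 t (f2 r2 K2 a h e d (x1 t) (x2 t))).

Definition liminf_ge (u : R -> R) (eps : R) : Prop :=
  forall eta, 0 < eta -> exists T, forall t, T <= t -> eps - eta <= u t.

Definition persistent (r1 r2 K1 K2 a h e d : R)
    (proj : (R -> R) -> (R -> R) -> (R -> R)) : Prop :=
  exists eps, 0 < eps /\
    forall x1 x2 : R -> R,
      is_solution r1 r2 K1 K2 a h e d x1 x2 ->
      0 < x1 0 -> 0 < x2 0 ->
      liminf_ge (proj x1 x2) eps.

Definition host_persistent r1 r2 K1 K2 a h e d :=
  persistent r1 r2 K1 K2 a h e d (fun x1 _ => x1).
Definition parasite_persistent r1 r2 K1 K2 a h e d :=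
  persistent r1 r2 K1 K2 a h e d (fun _ x2 => x2).
Definition permanent r1 r2 K1 K2 a h e d :=
  host_persistent r1 r2 K1 K2 a h e d /\ parasite_persistent r1 r2 K1 K2 a h e d.

(* Main.v *)
Require Import Defs.
From Stdlib Require Import Reals.
Open Scope R_scope.
From Stdlib Require Import Reals Lra.
Open Scope R_scope.

Definition ctn (f : R -> R) (x : R) : Prop :=
  forall eps, 0 < eps -> exists del, 0 < del /\
    forall y, Rabs (y - x) < del -> Rabs (f y - f x) < eps.

Lemma deriv_ctn f x l : derivable_pt_lim f x l -> ctn f x.
Proof.
  intros H. assert (C : continuity_pt f x).
  { apply derivable_continuous_pt. exists l. exact H. }
  intros eps Heps. destruct (C eps Heps) as [del [Hd Hy]].
  exists del. split; [exact Hd|]. intros y Hy'.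
  destruct (Req_dec y x) as [->|Hne].
  - rewrite Rminus_diag, Rabs_R0. exact Heps.
  - apply (Hy y). split. split; [exact I| auto]. exact Hy'.
Qed.

Lemma exp_le x y : x <= y -> exp x <= exp y.
Proof. intros [H|H]. left; apply exp_increasing; exact H. subst; lra. Qed.

Lemma last_cross f s t1 c : s < t1 -> (forall t, s <= t <= t1 -> ctn f t) ->
  f s <= c -> c < f t1 ->
  exists t0, s <= t0 < t1 /\ f t0 = c /\ forall t, t0 < t <= t1 -> c < f t.
Proof.
  intros Hst Hc Hs Ht.
  set (E := fun t => s <= t <= t1 /\ f t <= c).
  assert (Hb : bound E). { exists t1. intros t [Ht' _]. lra. }
  assert (He : exists x, E x). { exists s. split; [lra|exact Hs]. }
  destruct (completeness E Hb He) as [m [Hub Hlub]].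
  assert (Hsm : s <= m). { apply Hub. split; [lra|exact Hs]. }
  assert (Hmt : m <= t1). { apply Hlub. intros t [Ht' _]. lra. }
  assert (Hfm : f m <= c).
  { destruct (Rle_dec (f m) c) as [H|H]; [exact H|]. exfalso.
    destruct (Hc m (conj Hsm Hmt) (f m - c)) as [del [Hd Hy]]; [lra|].
    assert (m <= m - del/2); [|lra].
    apply Hlub. intros t [Ht1 Ht2].
    destruct (Rle_dec t (m - del/2)) as [H'|H']; [exact H'|].
    exfalso. assert (t <= m) by (apply Hub; split; assumption).
    assert (Rabs (t - m) < del) by (rewrite Rabs_left1; lra).
    specialize (Hy t H1). apply Rabs_def2 in Hy. lra. }
  assert (Hmt' : m < t1) by (destruct Hmt as [H|H]; [exact H|subst; lra]).
  assert (Hafter : forall t, m < t <= t1 -> c < f t).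
  { intros t Htt. destruct (Rlt_dec c (f t)) as [H|H]; [exact H|].
    assert (t <= m) by (apply Hub; split; [lra|lra]). lra. }
  exists m. split; [split; [exact Hsm|exact Hmt']|split; [|exact Hafter]].
  destruct Hfm as [Hlt|Heq]; [exfalso|exact Heq].
  destruct (Hc m (conj Hsm Hmt) (c - f m)) as [del [Hd Hy]]; [lra|].
  set (t := Rmin (m + del/2) t1).
  assert (Ht1 : m < t <= t1).
  { unfold t. split; [apply Rmin_glb_lt; lra|apply Rmin_r]. }
  assert (Ht2 : t <= m + del/2) by apply Rmin_l.
  assert (Rabs (t - m) < del) by (rewrite Rabs_right; lra).
  specialize (Hy t H). apply Rabs_def2 in Hy. specialize (Hafter t Ht1). lra.
Qed.

Lemma ctn_opp f x : ctn f x -> ctn (fun t => - f t) x.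
Proof. intros H eps He. destruct (H eps He) as [d [Hd Hy]]. exists d; split; auto.
  intros y Hy'. specialize (Hy y Hy'). replace (- f y - - f x) with (-(f y - f x)) by ring.
  rewrite Rabs_Ropp; auto. Qed.

Lemma incr f D s q : s <= q -> (forall t, s <= t <= q -> derivable_pt_lim f t (D t)) ->
  (forall t, s < t < q -> 0 <= D t) -> f s <= f q.
Proof.
  intros [Hsq|Hsq] Hd Hp; [|subst; lra].
  destruct (MVT_cor2 f D s q Hsq Hd) as [c [Hc Hc']].
  assert (0 <= D c * (q - s)) by (apply Rmult_le_pos; [apply Hp; exact Hc'|lra]). lra.
Qed.

Lemma barrier_below u D s q c :
  (forall t, s <= t <= q -> derivable_pt_lim u t (D t)) ->
  c <= u s -> (forall t, s < t <= q -> u t < c -> 0 <= D t) ->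
  forall t, s <= t <= q -> c <= u t.
Proof.
  intros Hd Hs Hp t1 Ht1. destruct (Rle_dec c (u t1)) as [H|H]; [exact H|exfalso].
  assert (Hst : s < t1). { destruct (Req_dec s t1); [subst; lra|lra]. }
  destruct (last_cross (fun t => - u t) s t1 (-c) Hst) as [t0 [Ht0 [Hf0 Hafter]]].
  - intros t Ht. apply ctn_opp. apply (deriv_ctn _ _ (D t)). apply Hd. lra.
  - lra.
  - lra.
  - assert (u t0 <= u t1).
    { apply (incr u D t0 t1); [lra| intros; apply Hd; lra|].
      intros t Ht. apply Hp; [lra|]. specialize (Hafter t (conj (proj1 Ht) (Rlt_le _ _ (proj2 Ht)))). lra. }
    lra.
Qed.

Lemma barrier_above u D s q c :
  (forall t, s <= t <= q -> derivable_pt_lim u t (D t)) ->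
  u s <= c -> (forall t, s < t <= q -> c < u t -> D t <= 0) ->
  forall t, s <= t <= q -> u t <= c.
Proof.
  intros Hd Hs Hp t Ht.
  assert (- c <= - u t); [|lra].
  apply (barrier_below (fun t => - u t) (fun t => - D t) s q (-c)); auto.
  - intros r Hr. apply (derivable_pt_lim_opp u). apply Hd; exact Hr.
  - lra.
  - intros r Hr Hl. specialize (Hp r Hr). lra.
Qed.

Lemma deriv_expk k r : derivable_pt_lim (fun t => exp (k * t)) r (exp (k * r) * k).
Proof.
  apply (derivable_pt_lim_comp (fun t => k * t) exp r k (exp (k * r))).
  - pose proof (derivable_pt_lim_scal id k r 1 (derivable_pt_lim_id r)) as H.
    rewrite Rmult_1_r in H. exact H.
  - apply derivable_pt_lim_exp.
Qed.

Lemma exp_growth u G s t k : s <= t ->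
  (forall r, s <= r <= t -> derivable_pt_lim u r (u r * G r)) ->
  (forall r, s < r < t -> 0 <= u r /\ k <= G r) ->
  u s * exp (k * (t - s)) <= u t.
Proof.
  intros Hst Hd Hp.
  assert (H : u s * exp (-k * s) <= u t * exp (-k * t)).
  { apply (incr (fun r => u r * exp (-k * r))
      (fun r => u r * G r * exp (-k * r) + u r * (exp (-k * r) * -k)) s t Hst).
    - intros r Hr. apply (derivable_pt_lim_mult u (fun t => exp (-k * t))).
      apply Hd; exact Hr. apply deriv_expk.
    - intros r Hr. destruct (Hp r Hr) as [H1 H2].
      replace (u r * G r * exp (- k * r) + u r * (exp (- k * r) * - k))
        with (u r * (G r - k) * exp (-k * r)) by ring.
      apply Rmult_le_pos; [apply Rmult_le_pos; lra| left; apply exp_pos]. }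
  apply (Rmult_le_compat_r (exp (k * t))) in H; [|left; apply exp_pos].
  replace (u t * exp (- k * t) * exp (k * t)) with (u t * exp (- k * t + k * t)) in H
    by (rewrite exp_plus; ring).
  replace (u s * exp (- k * s) * exp (k * t)) with (u s * exp (- k * s + k * t)) in H
    by (rewrite exp_plus; ring).
  replace (- k * t + k * t) with 0 in H by ring. rewrite exp_0 in H.
  replace (- k * s + k * t) with (k * (t - s)) in H by ring. lra.
Qed.

Lemma deriv_lin u r l m : derivable_pt_lim u r l ->
  derivable_pt_lim (fun t => u t + m * t) r (l + m).
Proof.
  intros H. pose proof (derivable_pt_lim_scal id m r 1 (derivable_pt_lim_id r)) as H2.
  rewrite Rmult_1_r in H2. apply (derivable_pt_lim_plus u (mult_real_fct m id) r l m H H2).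
Qed.

Lemma up_time u G s q alpha beta c kappa U tau :
  s <= q -> (forall r, s <= r <= q -> derivable_pt_lim u r (u r * G r)) ->
  (forall r, s <= r <= q -> 0 < u r) ->
  (forall r, s <= r <= q -> G r <= alpha - beta * u r) ->
  0 <= beta -> 0 < c -> 0 < kappa -> kappa <= beta * c - alpha ->
  u s <= U -> 0 <= tau -> U - c <= kappa * c * tau ->
  forall t, s + tau <= t <= q -> u t <= c.
Proof.
  intros Hsq Hd Hp HG Hb Hc Hk Hkb HU Ht0 Htau t Ht.
  destruct (Rle_dec (u t) c) as [H|H]; [exact H|exfalso].
  assert (A : forall r, s <= r <= t -> c < u r).
  { intros r Hr. destruct (Rlt_dec c (u r)) as [H1|H1]; [exact H1|exfalso].
    assert (u t <= c); [|lra].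
    apply (barrier_above u (fun r => u r * G r) r t c).
    - intros r' Hr'. apply Hd. lra.
    - lra.
    - intros r' Hr' Hl. assert (Hu := Hp r' ltac:(lra)). assert (HG' := HG r' ltac:(lra)).
      assert (G r' <= - kappa) by nra. nra.
    - lra. }
  assert (B : u t + kappa * c * t <= u s + kappa * c * s).
  { assert (- (u s + kappa * c * s) <= - (u t + kappa * c * t)); [|lra].
    apply (incr (fun r => - (u r + kappa * c * r)) (fun r => - (u r * G r + kappa * c)) s t).
    - lra.
    - intros r Hr. apply (derivable_pt_lim_opp (fun t => u t + kappa * c * t)).
      apply deriv_lin. apply Hd. lra.
    - intros r Hr. assert (Hu := A r ltac:(lra)). assert (HG' := HG r ltac:(lra)).
      assert (G r <= - kappa) by nra. nra. }
  assert (0 <= kappa * c * (t - s - tau)) by (apply Rmult_le_pos; nra). nra.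
Qed.

Lemma low_time u G s q alpha beta c kappa U tau :
  s <= q -> (forall r, s <= r <= q -> derivable_pt_lim u r (u r * G r)) ->
  (forall r, s <= r <= q -> 0 < u r) ->
  (forall r, s <= r <= q -> alpha - beta * u r <= G r) ->
  0 <= beta -> 0 < U -> U <= c -> 0 < kappa -> kappa <= alpha - beta * c ->
  U <= u s -> 0 <= tau -> c - U <= kappa * U * tau ->
  forall t, s + tau <= t <= q -> c <= u t.
Proof.
  intros Hsq Hd Hp HG Hb HU0 HUc Hk Hkb HU Ht0 Htau t Ht.
  assert (LU : forall r, s <= r <= q -> U <= u r).
  { apply (barrier_below u (fun r => u r * G r) s q U Hd HU).
    intros r Hr Hl. assert (Hu := Hp r ltac:(lra)). assert (HG' := HG r ltac:(lra)).
    assert (kappa <= G r) by nra. nra. }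
  destruct (Rle_dec c (u t)) as [H|H]; [exact H|exfalso].
  assert (A : forall r, s <= r <= t -> u r < c).
  { intros r Hr. destruct (Rlt_dec (u r) c) as [H1|H1]; [exact H1|exfalso].
    assert (c <= u t); [|lra].
    apply (barrier_below u (fun r => u r * G r) r t c).
    - intros r' Hr'. apply Hd. lra.
    - lra.
    - intros r' Hr' Hl. assert (Hu := Hp r' ltac:(lra)). assert (HG' := HG r' ltac:(lra)).
      assert (kappa <= G r') by nra. nra.
    - lra. }
  assert (B : u s + (- (kappa * U)) * s <= u t + (- (kappa * U)) * t).
  { apply (incr (fun r => u r + (- (kappa * U)) * r) (fun r => u r * G r + - (kappa * U)) s t).
    - lra.
    - intros r Hr. apply deriv_lin. apply Hd. lra.
    - intros r Hr. assert (Hu := A r ltac:(lra)). assert (HG' := HG r ltac:(lra)).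
      assert (HU' := LU r ltac:(lra)).
      assert (kappa <= G r) by nra. nra. }
  assert (0 <= kappa * U * (t - s - tau)) by (apply Rmult_le_pos; nra). nra.
Qed.

Lemma eventually_up u G s alpha beta c kappa :
  (forall r, s <= r -> derivable_pt_lim u r (u r * G r)) ->
  (forall r, s <= r -> 0 < u r) ->
  (forall r, s <= r -> G r <= alpha - beta * u r) ->
  0 <= beta -> 0 < c -> 0 < kappa -> kappa <= beta * c - alpha ->
  exists T, s <= T /\ forall t, T <= t -> u t <= c.
Proof.
  intros Hd Hp HG Hb Hc Hk Hkb.
  set (U := Rmax (u s) c). set (tau := (U - c) / (kappa * c)).
  assert (HUc : c <= U) by apply Rmax_r.
  assert (Htau : 0 <= tau).
  { unfold tau. apply Rmult_le_pos; [lra|]. left. apply Rinv_0_lt_compat. nra. }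
  exists (s + tau). split; [lra|]. intros t Ht.
  apply (up_time u G s t alpha beta c kappa U tau); auto; try lra.
  - intros; apply Hd; lra.
  - intros; apply Hp; lra.
  - intros; apply HG; lra.
  - apply Rmax_l.
  - right. unfold tau. field. lra.
Qed.

Lemma eventually_low u G s alpha beta c kappa :
  (forall r, s <= r -> derivable_pt_lim u r (u r * G r)) ->
  (forall r, s <= r -> 0 < u r) ->
  (forall r, s <= r -> alpha - beta * u r <= G r) ->
  0 <= beta -> 0 < c -> 0 < kappa -> kappa <= alpha - beta * c ->
  exists T, s <= T /\ forall t, T <= t -> c <= u t.
Proof.
  intros Hd Hp HG Hb Hc Hk Hkb.
  set (U := Rmin (u s) c). set (tau := (c - U) / (kappa * U)).
  assert (HUc : U <= c) by apply Rmin_r.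
  assert (HU0 : 0 < U). { unfold U. apply Rmin_glb_lt; [apply Hp; lra|lra]. }
  assert (Htau : 0 <= tau).
  { unfold tau. apply Rmult_le_pos; [lra|]. left. apply Rinv_0_lt_compat. nra. }
  exists (s + tau). split; [lra|]. intros t Ht.
  apply (low_time u G s t alpha beta c kappa U tau); auto; try lra.
  - intros; apply Hd; lra.
  - intros; apply Hp; lra.
  - intros; apply HG; lra.
  - apply Rmin_l.
  - right. unfold tau. field. lra.
Qed.

From Stdlib Require Import Classical.

Lemma decay_bound u G t0 r delta tau L :
  t0 <= r <= t0 + tau -> 0 <= L -> delta <= u t0 -> 0 < delta ->
  (forall x, t0 <= x <= r -> derivable_pt_lim u x (u x * G x)) ->
  (forall x, t0 <= x <= r -> 0 < u x /\ - L <= G x) ->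
  delta * exp (- L * tau) <= u r.
Proof.
  intros Hr HL Hd Hd0 Hder Hp.
  pose proof (exp_growth u G t0 r (-L) (proj1 Hr) Hder) as H.
  assert (H' : u t0 * exp (- L * (r - t0)) <= u r).
  { apply H. intros x Hx. destruct (Hp x ltac:(lra)); split; lra. }
  assert (exp (- L * tau) <= exp (- L * (r - t0))) by (apply exp_le; nra).
  pose proof (exp_pos (- L * tau)). nra.
Qed.

Lemma excursion u G T delta tau L k :
  (forall r, T <= r -> derivable_pt_lim u r (u r * G r)) ->
  (forall r, T <= r -> 0 < u r) -> 0 < delta -> 0 <= tau -> 0 <= L -> 0 < k ->
  (forall t, T <= t -> - L <= G t) ->
  (forall s t, T <= s -> s <= t -> (forall r, s <= r <= t -> u r <= delta) ->
     forall r, s + tau <= r <= t -> k <= G r) ->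
  exists T', forall t, T' <= t -> delta * exp (- L * tau) <= u t.
Proof.
  intros Hd Hp Hdel Htau HL Hk HGL H2.
  assert (S1 : exists s1, T <= s1 /\ delta < u s1).
  { destruct (classic (exists s1, T <= s1 /\ delta < u s1)) as [H|H]; [exact H|exfalso].
    assert (Hle : forall t, T <= t -> u t <= delta).
    { intros t Ht. destruct (Rle_dec (u t) delta) as [H'|H']; [exact H'|].
      exfalso; apply H; exists t; split; lra. }
    set (m := T + tau). set (u0 := u m).
    assert (Hu0 : 0 < u0) by (apply Hp; unfold m; lra).
    set (t := m + delta / (k * u0)).
    assert (Hq : 0 < delta / (k * u0)) by (apply Rdiv_lt_0_compat; nra).
    assert (E : u0 * exp (k * (t - m)) <= u t).
    { apply (exp_growth u G m t k); [unfold t; lra| |].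
      - intros r Hr; apply Hd; unfold m in *; lra.
      - intros r Hr. split; [left; apply Hp; unfold m in *; lra|].
        apply (H2 T t); try (unfold t, m in *; lra).
        intros r' Hr'; apply Hle; lra. }
    assert (E2 : 1 + k * (t - m) <= exp (k * (t - m))) by apply exp_ineq1_le.
    assert (E3 : k * (t - m) = delta / u0) by (unfold t; field; lra).
    assert (E4 : u0 * (delta / u0) = delta) by (field; lra).
    assert (u t <= delta) by (apply Hle; unfold t, m in *; lra).
    nra. }
  destruct S1 as [s1 [Hs1 Hus1]].
  exists s1. intros t Ht.
  assert (Hexp1 : exp (- L * tau) <= 1) by (rewrite <- exp_0; apply exp_le; nra).
  destruct (Rle_dec delta (u t)) as [H|H].
  { pose proof (exp_pos (- L * tau)). nra. }
  assert (Hst : s1 < t). { destruct (Req_dec s1 t); [subst; lra|lra]. }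
  destruct (last_cross (fun r => - u r) s1 t (- delta) Hst) as [t0 [Ht0 [Hf0 Hafter]]].
  - intros r Hr. apply ctn_opp. apply (deriv_ctn _ _ (u r * G r)). apply Hd; lra.
  - lra.
  - lra.
  - simpl in Hf0.
    assert (Hbelow : forall r, t0 <= r <= t -> u r <= delta).
    { intros r Hr. destruct (Req_dec r t0) as [->|Hne]; [lra|].
      specialize (Hafter r ltac:(lra)). lra. }
    destruct (Rle_dec t (t0 + tau)) as [Hc|Hc].
    + apply (decay_bound u G t0 t delta tau L); try lra.
      * intros; apply Hd; lra.
      * intros x Hx; split; [apply Hp; lra|apply HGL; lra].
    + set (m := t0 + tau).
      assert (Hm : delta * exp (- L * tau) <= u m).
      { apply (decay_bound u G t0 m delta tau L); unfold m in *; try lra.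
        * intros; apply Hd; lra.
        * intros x Hx; split; [apply Hp; lra|apply HGL; lra]. }
      assert (u m * exp (0 * (t - m)) <= u t).
      { apply (exp_growth u G m t 0); [unfold m; lra| |].
        - intros r Hr; apply Hd; unfold m in *; lra.
        - intros r Hr. split; [left; apply Hp; unfold m in *; lra|].
          assert (k <= G r); [|lra].
          apply (H2 t0 t); try exact Hbelow; unfold m in *; lra. }
      replace (0 * (t - m)) with 0 in H0 by ring. rewrite exp_0 in H0. lra.
Qed.

Lemma ctn_refl f x : ctn f (- x) -> ctn (fun t => f (- t)) x.
Proof. intros H eps He. destruct (H eps He) as [d [Hd Hy]]. exists d; split; auto.
  intros y Hy'. apply Hy. replace (- y - - x) with (- (y - x)) by ring. rewrite Rabs_Ropp; auto. Qed.

Lemma pos_forever u G p :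
  (forall t, p <= t -> derivable_pt_lim u t (u t * G t)) -> 0 < u p ->
  (forall q, p <= q -> exists C, forall r, p <= r <= q -> 0 <= u r -> - C <= G r) ->
  forall t, p <= t -> 0 < u t.
Proof.
  intros Hd Hp HC q Hq. destruct (Rlt_dec 0 (u q)) as [H|H]; [exact H|exfalso].
  assert (Hpq : p < q). { destruct (Req_dec p q); [subst; lra|lra]. }
  destruct (last_cross (fun t => u (- t)) (- q) (- p) 0) as [t0' [Ht0 [Hf0 Hafter]]].
  - lra.
  - intros t Ht. apply ctn_refl. apply (deriv_ctn _ _ (u (- t) * G (- t))). apply Hd; lra.
  - rewrite Ropp_involutive. lra.
  - rewrite Ropp_involutive. lra.
  - set (t0 := - t0'). simpl in Hf0.
    destruct (HC t0 ltac:(unfold t0; lra)) as [C HCb].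
    assert (E : u p * exp (- C * (t0 - p)) <= u t0).
    { apply (exp_growth u G p t0 (- C)); [unfold t0; lra| |].
      - intros r Hr; apply Hd; lra.
      - intros r Hr. assert (Hur : 0 < u r).
        { specialize (Hafter (- r) ltac:(unfold t0 in *; lra)). rewrite Ropp_involutive in Hafter. exact Hafter. }
        split; [lra|]. apply HCb; lra. }
    assert (0 < u p * exp (- C * (t0 - p))) by (apply Rmult_lt_0_compat; [lra|apply exp_pos]).
    unfold t0 in E, H0. simpl in Hf0. lra.
Qed.

Lemma div_le_abs y D : 1 <= D -> y / D <= Rabs y.
Proof.
  intros HD. apply (Rmult_le_reg_r D); [lra|].
  unfold Rdiv. rewrite Rmult_assoc, Rinv_l, Rmult_1_r by lra.
  pose proof (Rle_abs y). pose proof (Rabs_pos y). nra.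
Qed.

Lemma div_nonneg y D : 0 <= y -> 0 < D -> 0 <= y / D.
Proof. intros; unfold Rdiv; apply Rmult_le_pos; [lra|left; apply Rinv_0_lt_compat; lra]. Qed.

Lemma le_div_mul x y z : 0 < z -> x <= y / z -> x * z <= y.
Proof. intros Hz H. apply (Rmult_le_compat_r z) in H; [|lra].
  replace (y / z * z) with y in H by (field; lra). exact H. Qed.

Section Model.
Variables r1 r2 K1 K2 a h e d : R.
Hypotheses (Hr1 : 0 < r1) (Hr2 : 0 < r2) (HK1 : 0 < K1) (HK2 : 0 < K2) (Ha : 0 < a)
  (Hh : 0 < h) (He : 0 < e) (Hd : 0 <= d).

Definition phi (X : R) := e * a * X / (1 + h * a * X).
Definition G1 (x1 x2 : R -> R) t := r1 * (1 - x1 t / K1) - a * x2 t / (1 + h * a * x1 t).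
Definition G2 (x1 x2 : R -> R) t := e * a * x1 t / (1 + h * a * x1 t) - d + r2 * (1 - x2 t / K2).

Lemma phi_bounds X : 0 <= X -> 0 <= phi X <= e * a * X.
Proof.
  intros HX. unfold phi. assert (1 <= 1 + h * a * X) by (assert (0 <= h * a * X) by (apply Rmult_le_pos; [nra|lra]); lra).
  split. apply div_nonneg; [nra|lra].
  pose proof (div_le_abs (e * a * X) _ H). rewrite Rabs_right in H0 by nra. exact H0.
Qed.

Lemma phi_mono x y : 0 <= y <= x -> phi y <= phi x /\ phi x - phi y <= e * a * (x - y).
Proof.
  intros Hxy. unfold phi.
  assert (H1 : 1 <= 1 + h * a * x) by (assert (0 <= h * a * x) by (apply Rmult_le_pos; nra); lra).
  assert (H2 : 1 <= 1 + h * a * y) by (assert (0 <= h * a * y) by (apply Rmult_le_pos; nra); lra).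
  assert (E : e * a * x / (1 + h * a * x) - e * a * y / (1 + h * a * y)
              = e * a * (x - y) / ((1 + h * a * x) * (1 + h * a * y))) by (field; lra).
  assert (1 <= (1 + h * a * x) * (1 + h * a * y)) by nra.
  assert (0 <= e * a * (x - y)) by (apply Rmult_le_pos; nra).
  split.
  - assert (0 <= e * a * (x - y) / ((1 + h * a * x) * (1 + h * a * y))) by (apply div_nonneg; lra). lra.
  - rewrite E. pose proof (div_le_abs (e * a * (x - y)) _ H). rewrite Rabs_right in H3 by lra. exact H3.
Qed.

Lemma G1_upper x1 x2 t : 0 < x1 t -> 0 < x2 t -> G1 x1 x2 t <= r1 - (r1 / K1) * x1 t.
Proof.
  intros H1 H2. unfold G1.
  assert (0 <= a * x2 t / (1 + h * a * x1 t)) by (apply div_nonneg; [nra|]; assert (0 <= h * a * x1 t) by (apply Rmult_le_pos; nra); lra).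
  replace (r1 * (1 - x1 t / K1)) with (r1 - r1 / K1 * x1 t) by (field; lra). lra.
Qed.

Lemma G1_lower x1 x2 t : 0 < x1 t -> 0 < x2 t -> r1 - (r1 / K1) * x1 t - a * x2 t <= G1 x1 x2 t.
Proof.
  intros H1 H2. unfold G1.
  assert (1 <= 1 + h * a * x1 t) by (assert (0 <= h * a * x1 t) by (apply Rmult_le_pos; nra); lra).
  pose proof (div_le_abs (a * x2 t) _ H). rewrite Rabs_right in H0 by nra.
  replace (r1 * (1 - x1 t / K1)) with (r1 - r1 / K1 * x1 t) by (field; lra). lra.
Qed.

Lemma G2_eq x1 x2 t : G2 x1 x2 t = phi (x1 t) + (r2 - d) - (r2 / K2) * x2 t.
Proof. unfold G2, phi, Rdiv. ring. Qed.

Definition sol (x1 x2 : R -> R) : Prop :=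
  is_solution r1 r2 K1 K2 a h e d x1 x2 /\ 0 < x1 0 /\ 0 < x2 0.

Lemma sol_der x1 x2 : sol x1 x2 -> forall t, 0 < t ->
  derivable_pt_lim x1 t (x1 t * G1 x1 x2 t) /\ derivable_pt_lim x2 t (x2 t * G2 x1 x2 t).
Proof. intros [[_ H] _] t Ht. exact (H t Ht). Qed.

Lemma cont_of x t l : derivable_pt_lim x t l -> continuity_pt x t.
Proof. intros H. apply derivable_continuous_pt. exists l. exact H. Qed.

Lemma sol_pos x1 x2 : sol x1 x2 -> exists p, 0 < p /\ forall t, p <= t -> 0 < x1 t /\ 0 < x2 t.
Proof.
  intros Hs. destruct Hs as [[Hc Hder] [H10 H20]].
  destruct (Hc (Rmin (x1 0) (x2 0))) as [del [Hdel Hdd]].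
  { apply Rmin_glb_lt; lra. }
  set (p := del / 2). assert (Hp : 0 < p) by (unfold p; lra).
  destruct (Hdd p ltac:(unfold p; lra)) as [E1 E2].
  apply Rabs_def2 in E1. apply Rabs_def2 in E2.
  pose proof (Rmin_l (x1 0) (x2 0)). pose proof (Rmin_r (x1 0) (x2 0)).
  assert (Hder' : forall t, p <= t -> derivable_pt_lim x1 t (x1 t * G1 x1 x2 t) /\ derivable_pt_lim x2 t (x2 t * G2 x1 x2 t)).
  { intros t Ht. apply Hder. lra. }
  assert (Bnd : forall q, p <= q -> exists B, forall r, p <= r <= q -> Rabs (x1 r) <= B /\ Rabs (x2 r) <= B).
  { intros q Hq.
    destruct (continuity_ab_maj (fun t => Rabs (x1 t) + Rabs (x2 t)) p q Hq) as [M [HM _]].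
    - intros c Hc'. apply (continuity_pt_plus (fun t => Rabs (x1 t)) (fun t => Rabs (x2 t))).
      + apply (continuity_pt_comp x1 Rabs). apply (cont_of _ _ _ (proj1 (Hder' c ltac:(lra)))). apply Rcontinuity_abs.
      + apply (continuity_pt_comp x2 Rabs). apply (cont_of _ _ _ (proj2 (Hder' c ltac:(lra)))). apply Rcontinuity_abs.
    - exists (Rabs (x1 M) + Rabs (x2 M)). intros r Hr. specialize (HM r Hr). simpl in HM.
      pose proof (Rabs_pos (x1 r)). pose proof (Rabs_pos (x2 r)). split; lra. }
  assert (P1 : forall t, p <= t -> 0 < x1 t).
  { apply (pos_forever x1 (G1 x1 x2) p).
    - intros t Ht. apply (Hder' t Ht).
    - lra.
    - intros q Hq. destruct (Bnd q Hq) as [B HB]. exists (r1 / K1 * B + a * B).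
      intros r Hr Hx. destruct (HB r Hr) as [B1 B2]. unfold G1.
      assert (1 <= 1 + h * a * x1 r) by (assert (0 <= h * a * x1 r) by (apply Rmult_le_pos; nra); lra).
      pose proof (div_le_abs (a * x2 r) _ H1). rewrite Rabs_mult, (Rabs_right a) in H2 by lra.
      pose proof (Rle_abs (x1 r)).
      assert (r1 / K1 * x1 r <= r1 / K1 * B).
      { apply Rmult_le_compat_l; [apply div_nonneg; lra|lra]. }
      replace (r1 * (1 - x1 r / K1)) with (r1 - r1 / K1 * x1 r) by (field; lra). nra. }
  assert (P2 : forall t, p <= t -> 0 < x2 t).
  { apply (pos_forever x2 (G2 x1 x2) p).
    - intros t Ht. apply (Hder' t Ht).
    - lra.
    - intros q Hq. destruct (Bnd q Hq) as [B HB]. exists (d + r2 / K2 * B).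
      intros r Hr Hx. destruct (HB r Hr) as [B1 B2]. rewrite G2_eq.
      pose proof (phi_bounds (x1 r) ltac:(left; apply P1; lra)).
      pose proof (Rle_abs (x2 r)).
      assert (r2 / K2 * x2 r <= r2 / K2 * B).
      { apply Rmult_le_compat_l; [apply div_nonneg; lra|lra]. }
      lra. }
  exists p. split; [exact Hp|]. intros t Ht. split; auto.
Qed.

Definition X2b := K2 * (2 * e * a * K1 + r2) / r2 + K2.

Lemma X2b_pos : 0 < X2b.
Proof. unfold X2b. assert (0 <= K2 * (2 * e * a * K1 + r2) / r2); [|lra].
  apply div_nonneg; [|lra]. apply Rmult_le_pos; [lra|]. assert (0 <= e * a * K1) by (apply Rmult_le_pos; nra). lra. Qed.

Lemma sol_bounds x1 x2 : sol x1 x2 -> exists T, 0 < T /\ forall t, T <= t ->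
  0 < x1 t /\ 0 < x2 t /\ x1 t <= 2 * K1 /\ x2 t <= X2b.
Proof.
  intros Hs. destruct (sol_pos x1 x2 Hs) as [p [Hp Hpos]].
  pose proof (sol_der x1 x2 Hs) as Hder.
  destruct (eventually_up x1 (G1 x1 x2) p r1 (r1 / K1) (2 * K1) r1) as [T1 [HT1 HB1]].
  - intros r Hr. apply (Hder r ltac:(lra)).
  - intros r Hr. apply (Hpos r Hr).
  - intros r Hr. destruct (Hpos r Hr). apply G1_upper; auto.
  - apply div_nonneg; lra.
  - lra.
  - lra.
  - right. field. lra.
  - destruct (eventually_up x2 (G2 x1 x2) T1 (2 * e * a * K1 + r2) (r2 / K2) X2b r2) as [T2 [HT2 HB2]].
    + intros r Hr. apply (Hder r ltac:(lra)).
    + intros r Hr. apply (Hpos r ltac:(lra)).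
    + intros r Hr. rewrite G2_eq. destruct (Hpos r ltac:(lra)).
      pose proof (phi_bounds (x1 r) ltac:(lra)). pose proof (HB1 r Hr).
      assert (e * a * x1 r <= e * a * (2 * K1)) by (apply Rmult_le_compat_l; [nra|lra]). lra.
    + apply div_nonneg; lra.
    + exact X2b_pos.
    + lra.
    + right. unfold X2b. field. lra.
    + exists T2. split; [lra|]. intros t Ht. destruct (Hpos t ltac:(lra)).
      repeat split; auto. apply HB1; lra.
Qed.

Lemma host_gen s2 : 0 <= s2 -> a * s2 < r1 -> r2 - d - (r2 / K2) * s2 <= 0 ->
  exists eps, 0 < eps /\ forall x1 x2, sol x1 x2 -> exists T, forall t, T <= t -> eps <= x1 t.
Proof.
  intros Hs2 Hg Hcond.
  set (g := r1 - a * s2). assert (Hg0 : 0 < g) by (unfold g; lra).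
  set (c2 := s2 + g / (4 * a)).
  assert (Hc2 : 0 < c2) by (unfold c2; assert (0 < g / (4 * a)) by (apply Rdiv_lt_0_compat; lra); lra).
  set (Q1 := r2 * g / (8 * a * a * e * K2)). set (Q2 := g * K1 / (4 * r1)).
  assert (HQ1 : 0 < Q1) by (unfold Q1; apply Rdiv_lt_0_compat; [nra|]; repeat apply Rmult_lt_0_compat; lra).
  assert (HQ2 : 0 < Q2) by (unfold Q2; apply Rdiv_lt_0_compat; nra).
  set (del := Rmin Q1 Q2).
  assert (Hdel : 0 < del) by (unfold del; apply Rmin_glb_lt; lra).
  assert (Hdel1 : del <= Q1) by apply Rmin_l. assert (Hdel2 : del <= Q2) by apply Rmin_r.
  set (k2 := r2 * g / (8 * a * K2)).
  assert (Hk2 : 0 < k2) by (unfold k2; apply Rdiv_lt_0_compat; [nra|]; repeat apply Rmult_lt_0_compat; lra).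
  set (L1 := r1 + a * X2b).
  assert (HL1 : 0 <= L1) by (unfold L1; pose proof X2b_pos; nra).
  set (tau := Rmax 0 ((X2b - c2) / (k2 * c2))).
  assert (Htau : 0 <= tau) by apply Rmax_l.
  assert (A1 : k2 <= r2 / K2 * c2 - (e * a * del - d + r2)).
  { assert (E1 : e * a * del <= e * a * Q1) by (apply Rmult_le_compat_l; nra).
    assert (E2 : e * a * Q1 = k2) by (unfold Q1, k2; field; repeat split; lra).
    assert (E3 : r2 / K2 * c2 = r2 / K2 * s2 + 2 * k2) by (unfold c2, k2; field; lra).
    lra. }
  assert (A2 : X2b - c2 <= k2 * c2 * tau).
  { assert (E1 : (X2b - c2) / (k2 * c2) <= tau) by apply Rmax_r.
    apply (Rmult_le_compat_l (k2 * c2)) in E1; [|nra].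
    replace (k2 * c2 * ((X2b - c2) / (k2 * c2))) with (X2b - c2) in E1 by (field; lra). lra. }
  assert (A3 : g / 2 <= r1 - r1 / K1 * del - a * c2).
  { assert (E1 : r1 / K1 * del <= r1 / K1 * Q2) by (apply Rmult_le_compat_l; [apply div_nonneg|]; lra).
    assert (E2 : r1 / K1 * Q2 = g / 4) by (unfold Q2; field; lra).
    assert (E3 : a * c2 = a * s2 + g / 4) by (unfold c2; field; lra).
    unfold g in *. lra. }
  exists (del * exp (- L1 * tau)). split.
  { apply Rmult_lt_0_compat; [lra|apply exp_pos]. }
  intros x1 x2 Hs.
  destruct (sol_bounds x1 x2 Hs) as [T [HT HB]].
  pose proof (sol_der x1 x2 Hs) as Hder.
  apply (excursion x1 (G1 x1 x2) T del tau L1 (g / 2)); auto; try lra.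
  - intros r Hr. apply (Hder r ltac:(lra)).
  - intros r Hr. apply (HB r Hr).
  - intros t Ht. destruct (HB t Ht) as [P1 [P2 [B1 B2]]].
    pose proof (G1_lower x1 x2 t P1 P2).
    assert (r1 / K1 * x1 t <= r1 / K1 * (2 * K1)) by (apply Rmult_le_compat_l; [apply div_nonneg|]; lra).
    replace (r1 / K1 * (2 * K1)) with (2 * r1) in H0 by (field; lra).
    assert (a * x2 t <= a * X2b) by (apply Rmult_le_compat_l; lra).
    unfold L1. lra.
  - intros s t Hs' Hst Hle r Hr.
    assert (Hx2 : x2 r <= c2).
    { apply (up_time x2 (G2 x1 x2) s t (e * a * del - d + r2) (r2 / K2) c2 k2 X2b tau); auto; try lra.
      - intros r' Hr'. apply (Hder r' ltac:(lra)).
      - intros r' Hr'. apply (HB r' ltac:(lra)).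
      - intros r' Hr'. rewrite G2_eq. destruct (HB r' ltac:(lra)) as [P1 _].
        pose proof (phi_bounds (x1 r') ltac:(lra)). pose proof (Hle r' Hr').
        assert (e * a * x1 r' <= e * a * del) by (apply Rmult_le_compat_l; [nra|lra]). lra.
      - apply div_nonneg; lra.
      - apply (HB s ltac:(lra)). }
    destruct (HB r ltac:(lra)) as [P1 [P2 _]].
    pose proof (G1_lower x1 x2 r P1 P2).
    assert (r1 / K1 * x1 r <= r1 / K1 * del) by (apply Rmult_le_compat_l; [apply div_nonneg; lra|apply Hle; lra]).
    assert (a * x2 r <= a * c2) by (apply Rmult_le_compat_l; lra).
    lra.
Qed.

Lemma parasite_low : d < r2 ->
  exists eps, 0 < eps /\ forall x1 x2, sol x1 x2 -> exists T, forall t, T <= t -> eps <= x2 t.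
Proof.
  intros Hdr. set (c := (r2 - d) * K2 / (2 * r2)).
  assert (Hc : 0 < c) by (unfold c; apply Rdiv_lt_0_compat; nra).
  exists c. split; [exact Hc|]. intros x1 x2 Hs.
  destruct (sol_pos x1 x2 Hs) as [p [Hp Hpos]].
  pose proof (sol_der x1 x2 Hs) as Hder.
  destruct (eventually_low x2 (G2 x1 x2) p (r2 - d) (r2 / K2) c ((r2 - d) / 2)) as [T [_ HT]].
  - intros r Hr. apply (Hder r ltac:(lra)).
  - intros r Hr. apply (Hpos r Hr).
  - intros r Hr. rewrite G2_eq. destruct (Hpos r Hr).
    pose proof (phi_bounds (x1 r) ltac:(lra)). lra.
  - apply div_nonneg; lra.
  - exact Hc.
  - lra.
  - right. unfold c. field. lra.
  - exists T. exact HT.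
Qed.

Lemma parasite_high : r2 <= d -> 0 < r2 - d + phi K1 ->
  exists eps, 0 < eps /\ forall x1 x2, sol x1 x2 -> exists T, forall t, T <= t -> eps <= x2 t.
Proof.
  intros Hdr Hrho. set (rho := r2 - d + phi K1) in *.
  destruct (host_gen 0) as [e1 [He1 Hhost]]; [lra|rewrite Rmult_0_r; lra|rewrite Rmult_0_r; lra|].
  set (Qa := rho / (4 * e * a)).
  assert (HQa : 0 < Qa) by (unfold Qa; apply Rdiv_lt_0_compat; [lra|nra]).
  set (m := Rmin (K1 / 2) Qa).
  assert (Hm : 0 < m) by (unfold m; apply Rmin_glb_lt; lra).
  assert (Hm1 : m <= K1 / 2) by apply Rmin_l. assert (Hm2 : m <= Qa) by apply Rmin_r.
  set (c1 := K1 - m).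
  assert (Hphi : phi K1 - phi c1 <= rho / 4).
  { destruct (phi_mono K1 c1 ltac:(unfold c1; lra)) as [_ H].
    assert (e * a * (K1 - c1) <= e * a * Qa) by (apply Rmult_le_compat_l; [nra|unfold c1; lra]).
    assert (e * a * Qa = rho / 4) by (unfold Qa; field; lra). lra. }
  set (Qb := rho * K2 / (4 * r2)). set (Qc := r1 * m / (2 * a * K1)).
  assert (HQb : 0 < Qb) by (unfold Qb; apply Rdiv_lt_0_compat; nra).
  assert (HQc : 0 < Qc) by (unfold Qc; apply Rdiv_lt_0_compat; [nra|]; repeat apply Rmult_lt_0_compat; lra).
  set (del := Rmin Qb Qc).
  assert (Hdel : 0 < del) by (unfold del; apply Rmin_glb_lt; lra).
  assert (Hdel1 : del <= Qb) by apply Rmin_l. assert (Hdel2 : del <= Qc) by apply Rmin_r.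
  set (k1 := r1 * m / (2 * K1)).
  assert (Hk1 : 0 < k1) by (unfold k1; apply Rdiv_lt_0_compat; nra).
  set (U := Rmin e1 c1).
  assert (HU : 0 < U) by (unfold U; apply Rmin_glb_lt; unfold c1; lra).
  assert (HU1 : U <= e1) by apply Rmin_l. assert (HU2 : U <= c1) by apply Rmin_r.
  set (tau := (c1 - U) / (k1 * U)).
  assert (Htau : 0 <= tau) by (unfold tau; apply div_nonneg; nra).
  set (L2 := d + r2 * X2b / K2).
  assert (HL2 : 0 <= L2) by (unfold L2; pose proof X2b_pos; assert (0 <= r2 * X2b / K2) by (apply div_nonneg; nra); lra).
  assert (A1 : k1 <= r1 - a * del - r1 / K1 * c1).
  { assert (a * del <= a * Qc) by (apply Rmult_le_compat_l; lra).
    assert (a * Qc = k1) by (unfold Qc, k1; field; lra).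
    assert (r1 / K1 * c1 = r1 - 2 * k1) by (unfold c1, k1; field; lra). lra. }
  assert (A2 : r2 / K2 * del <= rho / 4).
  { assert (r2 / K2 * del <= r2 / K2 * Qb) by (apply Rmult_le_compat_l; [apply div_nonneg|]; lra).
    assert (r2 / K2 * Qb = rho / 4) by (unfold Qb; field; lra). lra. }
  exists (del * exp (- L2 * tau)). split.
  { apply Rmult_lt_0_compat; [lra|apply exp_pos]. }
  intros x1 x2 Hs.
  destruct (sol_bounds x1 x2 Hs) as [T [HT HB]].
  destruct (Hhost x1 x2 Hs) as [Th HTh].
  pose proof (sol_der x1 x2 Hs) as Hder.
  set (T' := Rmax T Th). assert (HT1 : T <= T') by apply Rmax_l. assert (HT2 : Th <= T') by apply Rmax_r.
  apply (excursion x2 (G2 x1 x2) T' del tau L2 (rho / 2)); auto; try lra.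
  - intros r Hr. apply (Hder r ltac:(lra)).
  - intros r Hr. apply (HB r ltac:(lra)).
  - intros t Ht. rewrite G2_eq. destruct (HB t ltac:(lra)) as [P1 [P2 [B1 B2]]].
    pose proof (phi_bounds (x1 t) ltac:(lra)).
    assert (r2 / K2 * x2 t <= r2 / K2 * X2b) by (apply Rmult_le_compat_l; [apply div_nonneg|]; lra).
    assert (r2 / K2 * X2b = r2 * X2b / K2) by (field; lra).
    unfold L2. lra.
  - intros s t Hs' Hst Hle r Hr.
    assert (Hx1 : c1 <= x1 r).
    { apply (low_time x1 (G1 x1 x2) s t (r1 - a * del) (r1 / K1) c1 k1 U tau); auto; try lra.
      - intros r' Hr'. apply (Hder r' ltac:(lra)).
      - intros r' Hr'. apply (HB r' ltac:(lra)).
      - intros r' Hr'. destruct (HB r' ltac:(lra)) as [P1 [P2 _]].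
        pose proof (G1_lower x1 x2 r' P1 P2). pose proof (Hle r' Hr').
        assert (a * x2 r' <= a * del) by (apply Rmult_le_compat_l; lra). lra.
      - apply div_nonneg; lra.
      - pose proof (HTh s ltac:(lra)). lra.
      - right. unfold tau. field. lra. }
    rewrite G2_eq. destruct (HB r ltac:(lra)) as [P1 [P2 _]].
    destruct (phi_mono (x1 r) c1 ltac:(unfold c1 in *; lra)) as [Hm3 _].
    assert (r2 / K2 * x2 r <= r2 / K2 * del) by (apply Rmult_le_compat_l; [apply div_nonneg; lra|apply Hle; lra]).
    unfold rho in *. lra.
Qed.

End Model.

Lemma to_persist r1 r2 K1 K2 a h e d proj :
  (exists eps, 0 < eps /\ forall x1 x2, sol r1 r2 K1 K2 a h e d x1 x2 ->
     exists T, forall t, T <= t -> eps <= proj x1 x2 t) ->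
  persistent r1 r2 K1 K2 a h e d proj.
Proof.
  intros [eps [He H]]. exists eps. split; [exact He|].
  intros x1 x2 Hs H1 H2 eta Heta. destruct (H x1 x2 (conj Hs (conj H1 H2))) as [T HT].
  exists T. intros t Ht. specialize (HT t Ht). lra.
Qed.

Theorem theorem1 (r1 r2 K1 K2 a h e d : R) :
  0 < r1 -> 0 < r2 -> 0 < K1 -> 0 < K2 -> 0 < a -> 0 < h -> 0 < e -> 0 <= d ->
  ((d > r2 \/ (r1 / a > K2 * (1 - d / r2) /\ K2 * (1 - d / r2) > 0)) ->
     host_persistent r1 r2 K1 K2 a h e d) /\
  (r2 + e * a * K1 / (1 + a * h * K1) > d ->
     parasite_persistent r1 r2 K1 K2 a h e d) /\
  (((r2 + e * a * K1 / (1 + a * h * K1) > d /\ d > r2) \/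
    (r1 / a > K2 * (1 - d / r2) /\ K2 * (1 - d / r2) > 0)) ->
     permanent r1 r2 K1 K2 a h e d).
Proof.
  intros Hr1 Hr2 HK1 HK2 Ha Hh He Hd.
  assert (HI : (d > r2 \/ (r1 / a > K2 * (1 - d / r2) /\ K2 * (1 - d / r2) > 0)) ->
     host_persistent r1 r2 K1 K2 a h e d).
  { intros Hc. unfold host_persistent. apply to_persist.
    destruct Hc as [Hdr | [H1 H2]].
    - apply (host_gen r1 r2 K1 K2 a h e d) with (s2 := 0); auto; rewrite ?Rmult_0_r; lra.
    - apply (host_gen r1 r2 K1 K2 a h e d) with (s2 := K2 * (1 - d / r2)); auto; try lra.
      + apply (Rmult_lt_compat_l a) in H1; [|lra].
        replace (a * (r1 / a)) with r1 in H1 by (field; lra). lra.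
      + right. field. split; lra. }
  assert (HII : r2 + e * a * K1 / (1 + a * h * K1) > d ->
     parasite_persistent r1 r2 K1 K2 a h e d).
  { intros Hc. unfold parasite_persistent. apply to_persist.
    destruct (Rlt_le_dec d r2) as [Hlt|Hge].
    - apply (parasite_low r1 r2 K1 K2 a h e d); auto.
    - apply (parasite_high r1 r2 K1 K2 a h e d); auto.
      unfold phi. replace (h * a * K1) with (a * h * K1) by ring. lra. }
  split; [exact HI|split; [exact HII|]].
  intros [[H1 H2] | [H1 H2]]; split.
  - apply HI. left. exact H2.
  - apply HII. exact H1.
  - apply HI. right. split; assumption.
  - apply HII.
    assert (Hdr : d < r2).
    { destruct (Rlt_le_dec d r2) as [H|H]; [exact H|].
      assert (1 - d / r2 <= 0).
      { assert (1 <= d / r2); [|lra].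
        apply (Rmult_le_reg_r r2); [lra|]. replace (d / r2 * r2) with d by (field; lra). lra. }
      assert (K2 * (1 - d / r2) <= 0) by nra. lra. }
    assert (0 <= e * a * K1 / (1 + a * h * K1)).
    { apply div_nonneg. repeat apply Rmult_le_pos; lra.
      assert (0 <= a * h * K1) by (repeat apply Rmult_le_pos; lra). lra. }
    lra.
Qed.
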